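(* Consider Method 1.1 (described in the context) and assume in addition: $f$ is convex; each $f_j$ is strongly convex with constant $\mu_j>0$; $D$ satisfies the Slater condition; no point of absolute minimum of $f$ on $\mathbb{R}^n$ (if any) lies in $\operatorname{int}D$. Then $X^*=\{x^*\}$ is a singleton, and, provided the generated sequence $\{y_i\}$ is bounded, every constructed point $x_k$ satisfies $\|x_k-x^*\|\le\sqrt{\varepsilon_k/\mu}$, where $\mu=\min_j\mu_j$; if moreover $f$ is Lipschitz with constant $L$, then also $|f(x_k)-f^*|\le L\sqrt{\varepsilon_k/\mu}$.
   Context: Setting: $f_j$, $j\in J=\{1,\dots,m\}$, are convex functions on $\mathbb{R}^n$; $D=\{x:f_j(x)\le0,\ j\in J\}$; $f$ is continuous and attains its minimum on $D$; each $D_j=\{x:f_j(x)\le0\}$ has nonempty interior. Notation: $K=\{0,1,\dots\}$; $F=\max_jf_j$; $D_\varepsilon=\{x:F(x)\le\varepsilon\}$; $f^*=\min_Df$; $X^*=\{x\in D:f(x)=f^*\}$; $E^*=\{x:f(x)\le f^*\}$; $W^1(x,D_j)=\{a:\|a\|=1,\ \langle a,z-x\rangle\le0\ \forall z\in D_j\}$. Method 1.1: fix $x^*\in X^*$; choose closed convex $M_0\ni x^*$, points $v^j\in\operatorname{int}D_j$, $\varepsilon_0\ge0$, a constant $q\ge1$; $k=i=0$. Step 1: choose $y_i\in M_i\cap E^*$. Step 2: $J_i=\{j:y_i\notin D_j\}$; stop if empty. Step 3: if $y_i\notin D_{\varepsilon_k}$, choose closed convex $G_i\ni x^*$, $Q_i=M_i\cap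 G_i$; else set $i_k=i$, $x_k=y_{i_k}$, choose closed convex $Q_i\ni x^*$, choose $\varepsilon_{k+1}\ge0$, $k\leftarrow k+1$. Step 4: for $j\in J_i$ choose $z_i^j\in(v^j,y_i)$, $z_i^j\notin\operatorname{int}D_j$, with $y_i+q_i^j(z_i^j-y_i)\in D_j$ for some $q_i^j\in[1,q]$; for $j\notin J_i$, $z_i^j=y_i$. Step 5: choose $H_i\subset J_i$ containing some $j_i$ maximizing $\|y_i-z_i^j\|$ over $J_i$. Step 6: for $j\in H_i$ choose nonempty finite $A_i^j\subset W^1(z_i^j,D_j)$; $M_{i+1}=Q_i\cap\{x:\langle a,x-z_i^j\rangle\le0\ \forall j\in H_i, a\in A_i^j\}$; $i\leftarrow i+1$, go to Step 1. *)

(* Defs.v *)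
From mathcomp Require Import all_boot all_order all_algebra.
From mathcomp Require Import reals.
Set Implicit Arguments. Unset Strict Implicit. Unset Printing Implicit Defensive.
Import Order.TTheory GRing.Theory Num.Theory.
Local Open Scope ring_scope.

Section Geometry.
Variables (R : realType) (n : nat).
Local Notation vec := 'rV[R]_n.

Definition dotp (u v : vec) : R := \sum_(i < n) u 0 i * v 0 i.
Definition enorm (u : vec) : R := Num.sqrt (dotp u u).

Definition convex_fun (g : vec -> R) : Prop :=
  forall (x y : vec) (t : R), 0 <= t <= 1 ->
    g (t *: x + (1 - t) *: y) <= t * g x + (1 - t) * g y.

(* strong convexity with constant mu (convention of the paper's school:
   g(tx+(1-t)y) <= t g x + (1-t) g y - mu t (1-t) ||x-y||^2) *)
Definition strongly_convex (g : vec -> R) (mu : R) : Prop :=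
  forall (x y : vec) (t : R), 0 <= t <= 1 ->
    g (t *: x + (1 - t) *: y)
      <= t * g x + (1 - t) * g y - mu * t * (1 - t) * (enorm (x - y)) ^+ 2.

Definition convex_set (S : vec -> Prop) : Prop :=
  forall (x y : vec) (t : R), S x -> S y -> 0 <= t <= 1 ->
    S (t *: x + (1 - t) *: y).

Definition closed_set (S : vec -> Prop) : Prop :=
  forall x : vec, (forall r : R, 0 < r -> exists y, S y /\ enorm (y - x) < r) -> S x.

Definition interior (S : vec -> Prop) (x : vec) : Prop :=
  exists r : R, 0 < r /\ forall y, enorm (y - x) < r -> S y.

Definition continuous_fun (g : vec -> R) : Prop :=
  forall (x : vec) (e : R), 0 < e ->
    exists d : R, 0 < d /\ forall y, enorm (y - x) < d -> `|g y - g x| < e.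

Definition lipschitz (g : vec -> R) (L : R) : Prop :=
  forall x y : vec, `|g x - g y| <= L * enorm (x - y).

Definition W1 (x : vec) (S : vec -> Prop) (a : vec) : Prop :=
  enorm a = 1 /\ forall z, S z -> dotp a (z - x) <= 0.

Definition open_segment (v y z : vec) : Prop :=
  exists t : R, 0 < t < 1 /\ z = v + t *: (y - v).

Definition is_min_on (g : vec -> R) (S : vec -> Prop) (fstar : R) : Prop :=
  (exists x, S x /\ g x = fstar) /\ forall x, S x -> fstar <= g x.

End Geometry.

Definition is_min_of (R : realType) (I : finType) (g : I -> R) (mu : R) : Prop :=
  (exists j, mu = g j) /\ forall j, mu <= g j.

Section Method.
Variables (R : realType) (n m : nat).
Local Notation vec := 'rV[R]_n.
Variable fs : 'I_m -> vec -> R.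

Definition Dj (j : 'I_m) (x : vec) : Prop := fs j x <= 0.
Definition Dset (x : vec) : Prop := forall j, fs j x <= 0.
(* D_eps = {x : F x <= eps}, F = max_j f_j; i.e. f_j x <= eps for all j *)
Definition Deps (eps : R) (x : vec) : Prop := forall j, fs j x <= eps.
Definition slater : Prop := exists x : vec, forall j, fs j x < 0.

(* iteration i of the method is reached: the method did not stop
   (Step 2) at any earlier iteration i' < i, i.e. J_i' was nonempty *)
Definition reached (y : nat -> vec) (i : nat) : Prop :=
  forall i', (i' < i)%N -> exists j, ~ Dj j (y i').

(* iteration i executes the "else" branch of Step 3: it sets
   i_k = i and x_k = y_i, with k = kc i *)
Definition sets_xk (y : nat -> vec) (eps : nat -> R) (kc : nat -> nat)
  (i : nat) : Prop :=
  reached y i /\ (exists j, ~ Dj j (y i)) /\ Deps (eps (kc i)) (y i).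

(* A run of Method 1.1.  Data:
   xstar = x^*, M i = M_i, v j = v^j, eps k = eps_k, q = q,
   y i = y_i, G i = G_i, Q i = Q_i, kc i = value of the counter k when
   iteration i starts, z i j = z_i^j, H i = H_i, A i j = A_i^j.
   f and fstar = f^* enter through E^* = {x : f x <= fstar}. *)
Definition method_1_1_run (f : vec -> R) (fstar : R) (xstar : vec)
  (M : nat -> vec -> Prop) (v : 'I_m -> vec) (eps : nat -> R) (q : R)
  (y : nat -> vec) (G Q : nat -> vec -> Prop) (kc : nat -> nat)
  (z : nat -> 'I_m -> vec) (H : nat -> 'I_m -> Prop)
  (A : nat -> 'I_m -> seq vec) : Prop :=
  [/\ (closed_set (M 0) /\ convex_set (M 0) /\ M 0 xstar),
      (forall j, interior (Dj j) (v j)),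
      (forall k, 0 <= eps k),
      (1 <= q /\ kc 0%N = 0%N) &
  forall i, reached y i ->
    (* Step 1 *)
    (M i (y i) /\ f (y i) <= fstar) /\
    (* Step 2: continue only if J_i = {j : y_i notin D_j} is nonempty *)
    ((exists j, ~ Dj j (y i)) ->
      [/\
      (* Step 3 *)
        (~ Deps (eps (kc i)) (y i) ->
           [/\ closed_set (G i), convex_set (G i), G i xstar,
               (forall x, Q i x <-> M i x /\ G i x) & kc i.+1 = kc i]),
        (Deps (eps (kc i)) (y i) ->
           [/\ closed_set (Q i), convex_set (Q i), Q i xstar &
               kc i.+1 = (kc i).+1]),
      (* Step 4 *)
        (forall j, ~ Dj j (y i) ->
           [/\ open_segment (v j) (y i) (z i j),
               ~ interior (Dj j) (z i j) &
               exists qij, 1 <= qij <= q /\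
                 Dj j (y i + qij *: (z i j - y i))]),
        (forall j, Dj j (y i) -> z i j = y i) /\
      (* Step 5 *)
        ((forall j, H i j -> ~ Dj j (y i)) /\
         exists ji, [/\ H i ji, ~ Dj ji (y i) &
           forall j, ~ Dj j (y i) -> enorm (y i - z i j) <= enorm (y i - z i ji)]) &
      (* Step 6 *)
        ((forall j, H i j ->
            A i j <> [::] /\ forall a, a \in A i j -> W1 (z i j) (Dj j) a) /\
         forall x, M i.+1 x <->
           (Q i x /\ forall j, H i j -> forall a, a \in A i j ->
                                   dotp a (x - z i j) <= 0))])].

End Method.

(* Main.v *)
Require Import Defs.
From mathcomp Require Import all_boot all_order all_algebra.
From mathcomp Require Import reals.
From mathcomp Require Import ring lra.
Import Order.TTheory GRing.Theory Num.Theory.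
Local Open Scope ring_scope.

Section Aux.
Variables (R : realType) (n : nat).
Local Notation vec := 'rV[R]_n.

Lemma jensen (g : vec -> R) (I : Type) (s : seq I) (F : I -> vec) :
  convex_fun g -> (0 < size s)%N ->
  g ((size s)%:R^-1 *: \sum_(i <- s) F i) <= (size s)%:R^-1 * \sum_(i <- s) g (F i).
Proof.
move=> cg; elim: s => [//|a s IH] _.
case: s IH => [|b s] IH.
  by rewrite /= !big_cons !big_nil !addr0 (_ : 1%:R = 1) // invr1 scale1r mul1r.
have /(_ isT) IH' := IH.
set S := \sum_(i <- b :: s) F i in IH' *.
set T := \sum_(i <- b :: s) g (F i) in IH' *.
have -> : \sum_(i <- [:: a, b & s]) F i = F a + S by rewrite big_cons.
have -> : \sum_(i <- [:: a, b & s]) g (F i) = g (F a) + T by rewrite big_cons.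
set k := size (b :: s) in IH' *.
have kpos : (0 < k%:R :> R) by rewrite ltr0n.
have -> : size [:: a, b & s] = k.+1 by [].
set t := (k.+1%:R : R)^-1.
have k1pos : (0 < k.+1%:R :> R) by rewrite ltr0n.
have t01 : 0 <= t <= 1.
  rewrite /t invr_ge0 ler0n /= invf_le1 // ler1n //.
have E : t *: (F a + S) = t *: F a + (1 - t) *: (k%:R^-1 *: S).
  rewrite scalerDr scalerA; congr (_ + _ *: _).
  rewrite /t -natr1; field; apply/andP; split; rewrite gt_eqF //.
  by rewrite natr1.
rewrite E; apply: le_trans (cg _ _ _ t01) _.
have h1 : 0 <= 1 - t by case/andP: t01 => _; rewrite subr_ge0.
rewrite mulrDr lerD2l.
apply: le_trans (ler_wpM2l h1 IH') _.
rewrite mulrA le_eqVlt; apply/orP; left; apply/eqP; congr (_ * _).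
rewrite /t -natr1; field; apply/andP; split; rewrite gt_eqF //.
by rewrite natr1.
Qed.

Lemma dotp_ge0 (u : vec) : 0 <= dotp u u.
Proof. by apply: sumr_ge0 => i _; rewrite -expr2 sqr_ge0. Qed.

Lemma enorm_sqr (u : vec) : enorm u ^+ 2 = dotp u u.
Proof. by rewrite /enorm sqr_sqrtr // dotp_ge0. Qed.

Lemma enorm_ge0 (u : vec) : 0 <= enorm u.
Proof. exact: sqrtr_ge0. Qed.

Lemma dotp_eq0 (u : vec) : dotp u u = 0 -> u = 0.
Proof.
move=> /eqP; rewrite /dotp psumr_eq0 => [/allP H|i _]; last by rewrite -expr2 sqr_ge0.
apply/rowP => i; rewrite mxE.
have := H i (mem_index_enum _); rewrite implyTb -expr2 sqrf_eq0.
by move/eqP.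
Qed.

Lemma enorm_gt0 (u : vec) : u != 0 -> 0 < enorm u.
Proof.
move=> nz; rewrite lt_neqAle enorm_ge0 andbT eq_sym /enorm sqrtr_eq0.
apply/negP => H; have E : dotp u u = 0 by apply/eqP; rewrite eq_le H dotp_ge0.
by move: nz; rewrite (@dotp_eq0 u E) eqxx.
Qed.

Lemma dotpZ (t : R) (u : vec) : dotp (t *: u) (t *: u) = t ^+ 2 * dotp u u.
Proof.
rewrite /dotp mulr_sumr; apply: eq_bigr => i _; rewrite !mxE; ring.
Qed.

Lemma enormZ (t : R) (u : vec) : enorm (t *: u) = `|t| * enorm u.
Proof. by rewrite /enorm dotpZ sqrtrM ?sqr_ge0 // sqrtr_sqr. Qed.

Lemma coord_le (u : vec) i : `|u 0 i| <= enorm u.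
Proof.
rewrite -sqrtr_sqr /enorm ler_sqrt ?dotp_ge0 // /dotp (bigD1 i) //= -expr2.
by rewrite lerDl; apply: sumr_ge0 => k _; rewrite -expr2 sqr_ge0.
Qed.


Lemma size_ie : size (index_enum 'I_n) = n.
Proof. rewrite /index_enum; unlock. by rewrite -enumT -cardT card_ord. Qed.

Lemma line_bound (g : vec -> R) (w a : vec) (B t : R) :
  convex_fun g -> g (w + a) <= B -> g (w - a) <= B -> `|t| <= 1 ->
  g (w + t *: a) <= g w + `|t| * (B - g w).
Proof.
move=> cg h1 h2 ht.
have [t0|t0] := leP 0 t.
  have ht' : 0 <= t <= 1 by rewrite t0 -(ger0_norm t0) ht.
  have -> : w + t *: a = t *: (w + a) + (1 - t) *: w.
    by apply/rowP => i; rewrite !mxE; ring.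
  apply: le_trans (cg _ _ _ ht') _.
  rewrite ger0_norm //.
  have := ler_wpM2l t0 h1; lra.
have ht' : 0 <= - t <= 1 by rewrite oppr_ge0 (ltW t0) -(ltr0_norm t0) ht.
have -> : w + t *: a = (- t) *: (w - a) + (1 - (- t)) *: w.
  by apply/rowP => i; rewrite !mxE; ring.
apply: le_trans (cg _ _ _ ht') _.
rewrite ltr0_norm //.
have tn : 0 <= - t by lra.
have := ler_wpM2l tn h2; lra.
Qed.


Lemma conv_nbhd (g : vec -> R) (w : vec) :
  convex_fun g -> g w < 0 ->
  exists r, 0 < r /\ forall y, enorm (y - w) < r -> g y < 0.
Proof.
move=> cg gw0.
have [n0|npos] := posnP n.
  exists 1; split => // y _.
  have -> : y = w by apply/rowP => i; by move: (ltn_ord i); rewrite {2}n0.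
  done.
set N : R := n%:R.
have Npos : 0 < N by rewrite ltr0n.
pose a (i : 'I_n) : vec := N *: delta_mx 0 i.
set C := \sum_(i < n) (`|g (w + a i)| + `|g (w - a i)|).
have Cb : forall i, `|g (w + a i)| + `|g (w - a i)| <= C.
  move=> i; rewrite /C (bigD1 i) //= lerDl.
  by apply: sumr_ge0 => k _; rewrite addr_ge0.
have C1 : forall i, g (w + a i) <= C.
  move=> i; apply: le_trans (Cb i); apply: le_trans (ler_norm _) _.
  by rewrite lerDl.
have C2 : forall i, g (w - a i) <= C.
  move=> i; apply: le_trans (Cb i); apply: le_trans (ler_norm _) _.
  by rewrite lerDr.
have C0 : 0 <= C by apply: le_trans (Cb (Ordinal npos)); rewrite addr_ge0.
set gw := g w in gw0 *.
set K := C - gw.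
have Kpos : 0 < K by rewrite /K; lra.
set d := - gw / (2 * K).
have dpos : 0 < d by rewrite /d divr_gt0 //; lra.
have dK : d * K = - gw / 2.
  by rewrite /d; field; rewrite gt_eqF.
have dle : d <= 1.
  have : d * K <= K by rewrite dK /K; lra.
  by rewrite -{2}(mul1r K) ler_pM2r.
exists d; split => // y hy.
set u := y - w.
pose q (i : 'I_n) : vec := w + (u 0 i) *: a i.
have Ey : y = (size (index_enum 'I_n))%:R^-1 *: \sum_(i <- index_enum 'I_n) q i.
  rewrite size_ie -/N big_split /= sumr_const card_ord.
  have -> : \sum_(i <- index_enum 'I_n) u 0 i *: a i = N *: u.
    rewrite [in RHS](row_sum_delta u) scaler_sumr; apply: eq_bigr => i _.
    by rewrite /a !scalerA mulrC.
  rewrite scalerDr scalerA mulVf ?gt_eqF // scale1r -scaler_nat scalerA.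
  rewrite mulVf ?gt_eqF // scale1r /u; apply/rowP => i; rewrite !mxE; ring.
rewrite Ey; apply: le_lt_trans (@jensen g _ (index_enum 'I_n) q cg _) _; first by rewrite size_ie.
rewrite size_ie -/N.
have Hq : forall i, g (q i) <= gw + d * K.
  move=> i; have hu : `|u 0 i| <= 1.
    by apply: le_trans (coord_le _ _) _; apply: ltW; apply: lt_le_trans dle.
  apply: le_trans (@line_bound g w (a i) C (u 0 i) cg (C1 i) (C2 i) hu) _.
  rewrite lerD2l ler_wpM2r //; last first.
    by apply: ltW; apply: le_lt_trans (coord_le _ _) hy.
  by have := Kpos; rewrite /K /gw => /ltW.
apply: (@le_lt_trans _ _ (N^-1 * \sum_(i <- index_enum 'I_n) (gw + d * K))).
  apply: ler_wpM2l; first by rewrite invr_ge0 ltW.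
  by apply: ler_sum => i _; exact: Hq.
rewrite sumr_const card_ord -mulr_natr -/N mulrC -mulrA mulfV ?gt_eqF // mulr1 dK.
lra.
Qed.


End Aux.

Lemma fin_nbhd (R : realType) (m : nat) (P : 'I_m -> R -> Prop) :
  (forall j r r', 0 < r' -> r' <= r -> P j r -> P j r') ->
  (forall j, exists r, 0 < r /\ P j r) ->
  exists r, 0 < r /\ forall j, P j r.
Proof.
move=> mono ex.
suff [r [r0 hr]] : exists r, 0 < r /\ forall j, j \in index_enum 'I_m -> P j r.
  by exists r; split => // j; apply: hr; rewrite mem_index_enum.
elim: (index_enum 'I_m) => [|a s [r [r0 hr]]].
  by exists 1; split.
have [ra [ra0 hra]] := ex a.
exists (Order.min ra r); split; first by rewrite lt_min ra0 r0.
move=> j; rewrite in_cons => /orP [/eqP ->|js].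
  by apply: mono hra; rewrite ?lt_min ?ra0 ?r0 // ge_min lexx.
by apply: mono (hr j js); rewrite ?lt_min ?ra0 ?r0 // ge_min lexx orbT.
Qed.

Theorem theorem1p1p4 (R : realType) (n m : nat)
  (fs : 'I_m -> 'rV[R]_n -> R) (mus : 'I_m -> R) (mu : R)
  (f : 'rV[R]_n -> R) (fstar : R) (xstar : 'rV[R]_n)
  (M : nat -> 'rV[R]_n -> Prop) (v : 'I_m -> 'rV[R]_n) (eps : nat -> R)
  (q : R) (y : nat -> 'rV[R]_n) (G Q : nat -> 'rV[R]_n -> Prop)
  (kc : nat -> nat) (z : nat -> 'I_m -> 'rV[R]_n)
  (H : nat -> 'I_m -> Prop) (A : nat -> 'I_m -> seq 'rV[R]_n) :
  (0 < m)%N ->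
  (* standing assumptions *)
  (forall j, convex_fun (fs j)) ->
  continuous_fun f ->
  is_min_on f (Dset fs) fstar ->
  (forall j, exists x, interior (Dj fs j) x) ->
  (* additional assumptions *)
  convex_fun f ->
  (forall j, 0 < mus j) ->
  (forall j, strongly_convex (fs j) (mus j)) ->
  slater fs ->
  (forall x, (forall x', f x <= f x') -> ~ interior (Dset fs) x) ->
  is_min_of mus mu ->
  (* the method, with fixed x^* in X^* *)
  Dset fs xstar -> f xstar = fstar ->
  method_1_1_run fs f fstar xstar M v eps q y G Q kc z H A ->
  (* X^* = {x^*} *)
  (forall x, (Dset fs x /\ f x = fstar) <-> x = xstar) /\
  ((exists B, forall i, reached fs y i -> enorm (y i) <= B) ->
   forall i, sets_xk fs y eps kc i ->
     (* x_(kc i) = y i *)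
     enorm (y i - xstar) <= Num.sqrt (eps (kc i) / mu) /\
     (forall L, lipschitz f L ->
        `|f (y i) - fstar| <= L * Num.sqrt (eps (kc i) / mu))).
Proof.
move=> m0 cfs _ [_ fmin] _ cf musp scfs _ nomin [[j1 muE] mule] Dx fx run.
have mupos : 0 < mu by rewrite muE.
have h12 : 0 <= (2^-1 : R) <= 1.
  by rewrite invr_ge0 ler0n /= invf_le1 ?ltr0n ?ler1n.
have U : forall x, Dset fs x -> f x = fstar -> x = xstar.
  move=> x Dxx fxx; apply/eqP; apply: contraT => hne.
  have dnz : x - xstar != 0 by rewrite subr_eq0.
  have Dp : 0 < enorm (x - xstar) ^+ 2 by rewrite exprn_gt0 //; apply: enorm_gt0.
  set w := 2^-1 *: x + (1 - 2^-1) *: xstar.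
  have fsw : forall j, fs j w < 0.
    move=> j; apply: le_lt_trans (scfs j _ _ _ h12) _.
    have := Dxx j; have := Dx j; have := musp j.
    set a := fs j x; set b := fs j xstar; set c := mus j.
    set D := enorm (x - xstar) ^+ 2 in Dp *.
    move=> cp hb ha.
    have : 0 < c * 2^-1 * (1 - 2^-1) * D.
      have cD : 0 < c * D by rewrite mulr_gt0.
      have -> : c * 2^-1 * (1 - 2^-1) * D = (c * D) / 4 by field.
      lra.
    have : 2^-1 * a <= 0 by rewrite mulr_ge0_le0 // invr_ge0 ler0n.
    have : (1 - 2^-1) * b <= 0.
      by rewrite mulr_ge0_le0 // subr_ge0; case/andP: h12.
    lra.
  have fw : f w <= fstar.
    apply: le_trans (cf _ _ _ h12) _; rewrite fxx fx; lra.
  have Dw : Dset fs w by move=> j; apply: ltW.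
  have fw' : f w = fstar by apply/eqP; rewrite eq_le fw fmin.
  have [r [r0 hr]] : exists r, 0 < r /\ forall j y, enorm (y - w) < r -> fs j y < 0.
    apply: (@fin_nbhd R m (fun j r => forall y, enorm (y - w) < r -> fs j y < 0)).
      by move=> j r r' _ rr' h y1 hy1; apply: h; apply: lt_le_trans rr'.
    by move=> j; apply: conv_nbhd.
  have intw : interior (Dset fs) w.
    by exists r; split => // y1 hy1 j; apply: ltW; apply: hr.
  suff gm : forall x', f w <= f x' by exfalso; exact: (nomin w gm intw).
  move=> x'.
  rewrite leNgt; apply/negP => fx'.
  set E := enorm (x' - w).
  have E0 : 0 <= E by apply: enorm_ge0.
  set t := r / (2 * (E + r)).
  have tpos : 0 < t by rewrite /t divr_gt0 // mulr_gt0 // ltr_wpDl.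
  have teq : t * E * 2 + t * r * 2 = r.
    by rewrite /t; field; rewrite gt_eqF // ltr_wpDl.
  have trpos : 0 < t * r by rewrite mulr_gt0.
  have tE0 : 0 <= t * E by rewrite mulr_ge0 // ltW.
  have t1 : t <= 1 by rewrite -(ler_pM2r r0) mul1r; lra.
  have t01 : 0 <= t <= 1 by rewrite (ltW tpos) t1.
  set p := t *: x' + (1 - t) *: w.
  have Dpp : Dset fs p.
    move=> j; apply: ltW; apply: hr.
    have -> : p - w = t *: (x' - w) by apply/rowP => i; rewrite !mxE; ring.
    rewrite enormZ ger0_norm ?(ltW tpos) // -/E; lra.
  have := fmin p Dpp.
  have := cf x' w t t01.
  have : t * f x' < t * f w by rewrite ltr_pM2l.
  lra.
split.
  by move=> x; split => [[]|->] //; apply: U.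
move=> _ i [hreach [[j0 hj0] hDeps]].
case: run => _ _ heps _ Hrun.
have [[_ fy] _] := Hrun i hreach.
set yy := y i in hj0 hDeps fy *.
set e := eps (kc i) in hDeps *.
have e0 : 0 <= e by apply: heps.
set D := enorm (yy - xstar) ^+ 2.
have D0 : 0 <= D by rewrite /D exprn_ge0 // enorm_ge0.
have Kt : forall t, 0 < t < 1 -> mu * (1 - t) * D < e.
  move=> t /andP [t0 t1]; rewrite ltNge; apply/negP => he.
  have t01 : 0 <= t <= 1 by rewrite ltW // ltW.
  set p := t *: yy + (1 - t) *: xstar.
  have Dpp : Dset fs p.
    move=> j; apply: le_trans (scfs j _ _ _ t01) _; rewrite -/D.
    have h1 : t * fs j yy <= t * e by apply: ler_wpM2l; [exact: ltW | exact: hDeps].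
    have h2 : (1 - t) * fs j xstar <= 0 by rewrite mulr_ge0_le0 // subr_ge0 ltW.
    have h3 : mu * (t * ((1 - t) * D)) <= mus j * (t * ((1 - t) * D)).
      apply: ler_wpM2r; last exact: mule.
      apply: mulr_ge0; [exact: ltW | apply: mulr_ge0 => //; rewrite subr_ge0 ltW //].
    have h4 : t * e <= t * (mu * (1 - t) * D) by apply: ler_wpM2l; [exact: ltW | ].
    have -> : mus j * t * (1 - t) * D = mus j * (t * ((1 - t) * D)) by ring.
    have : t * (mu * (1 - t) * D) = mu * (t * ((1 - t) * D)) by ring.
    lra.
  have fp : f p <= fstar.
    apply: le_trans (cf _ _ _ t01) _; rewrite fx.
    have : t * f yy <= t * fstar by apply: ler_wpM2l; [exact: ltW | ].
    lra.
  have := U p Dpp; rewrite (_ : f p = fstar); last by apply/eqP; rewrite eq_le fp fmin.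
  move=> /(_ erefl) pE.
  have : t *: (yy - xstar) = 0.
    by rewrite -[RHS](subrr xstar) -{2}pE /p; apply/rowP => k; rewrite !mxE; ring.
  move/eqP; rewrite scaler_eq0 gt_eqF //= subr_eq0 => /eqP yyE.
  by apply: hj0; rewrite /Dj yyE; apply: Dx.
have muD : mu * D <= e.
  rewrite leNgt; apply/negP => hlt.
  have P0 : 0 < mu * D by apply: le_lt_trans hlt.
  set t := (mu * D - e) / (2 * (mu * D)).
  have teq : t * (mu * D) * 2 = mu * D - e.
    rewrite /t; field; rewrite (gt_eqF mupos) andbT; apply/eqP => D0E.
    by move: P0; rewrite D0E mulr0 ltxx.
  have tpos : 0 < t.
    rewrite /t; apply: divr_gt0; lra.
  have tP : 0 < t * (mu * D) by exact: (mulr_gt0 tpos P0).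
  have t1 : t < 1.
    rewrite -(ltr_pM2r P0) mul1r; lra.
  have := Kt t; rewrite tpos t1 => /(_ isT).
  have -> : mu * (1 - t) * D = mu * D - t * (mu * D) by ring.
  lra.
have De : D <= e / mu by rewrite ler_pdivlMr // mulrC.
have nb : enorm (yy - xstar) <= Num.sqrt (e / mu).
  rewrite -(ger0_norm (@enorm_ge0 _ _ (yy - xstar))) -sqrtr_sqr ler_sqrt //.
  by rewrite divr_ge0 // ltW.
split => // L lip.
have := lip yy xstar; rewrite fx => hl.
have [L0|L0] := leP 0 L.
  by apply: le_trans hl _; apply: ler_wpM2l.
exfalso.
have yne : yy - xstar != 0.
  by rewrite subr_eq0; apply/eqP => yyE; apply: hj0; rewrite /Dj yyE; apply: Dx.
have := @enorm_gt0 _ _ _ yne => ep.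
have : L * enorm (yy - xstar) < 0 by rewrite pmulr_llt0.
have := normr_ge0 (f yy - fstar).
lra.
Qed.
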